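(* Let $2\le n\le\infty$. (1) If $a\in A\setminus C$ is $n$-RF rel a subgroup $C\le A$, then it is $m$-RF rel $C$ for every $2\le m\le n$. (2) For subgroups $C\le B\le A$, if $a\in A\setminus B$ is $n$-RF rel $B$, then it is $n$-RF rel $C$. (3) For subgroups $C\le B\le A$, if $(A,B)$ and $(B,C)$ are both $n$-RF, then $(A,C)$ is $n$-RF.
   Context: For a group $G$, subgroup $D$, and $2\le n\le\infty$: $a\in G\setminus D$ is $n$-RF rel $D$ if $a^{e_1}d_1\cdots a^{e_k}d_k\ne\mathrm{id}$ for all $k\ge1$, $e_i\in\{\pm1\}$, $d_i\in D$ such that $d_i\ne\mathrm{id}$ whenever $e_i=-e_{i+1}$ (indices mod $k$), and fewer than $n$ of the $e_i$ are $+1$ and fewer than $n$ are $-1$. The pair $(G,D)$ is $n$-RF if every element of $G\setminus D$ is $n$-RF rel $D$. *)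

(* Defs.v *)
From mathcomp Require Import all_boot.
Set Implicit Arguments. Unset Strict Implicit. Unset Printing Implicit Defensive.

Record grp := Grp {
  gcar :> Type;
  gmul : gcar -> gcar -> gcar;
  ginv : gcar -> gcar;
  gone : gcar;
  gmulA : forall x y z, gmul x (gmul y z) = gmul (gmul x y) z;
  gmul1g : forall x, gmul gone x = x;
  gmulg1 : forall x, gmul x gone = x;
  gmulVg : forall x, gmul (ginv x) x = gone;
  gmulgV : forall x, gmul x (ginv x) = gone
}.

Definition is_subgroup (G : grp) (D : G -> Prop) : Prop :=
  D (gone G) /\ (forall x y, D x -> D y -> D (gmul x y)) /\
  (forall x, D x -> D (ginv x)).

Inductive natinf := Fin of nat | Inf.

Definition lt_ni (k : nat) (n : natinf) : Prop :=
  match n with Fin m => (k < m)%N | Inf => True end.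

Definition le_ni (m n : natinf) : Prop :=
  match m, n with
  | Fin a, Fin b => (a <= b)%N
  | _, Inf => True
  | Inf, Fin _ => False
  end.

Definition two_le (n : natinf) : Prop := le_ni (Fin 2) n.

(* a^e with e : bool (true = +1, false = -1) *)
Definition apow (G : grp) (a : G) (e : bool) : G := if e then a else ginv a.

(* A word is a sequence [(e_1,d_1); ...; (e_k,d_k)];
   its value is a^{e_1} d_1 ... a^{e_k} d_k. *)
Definition word_val (G : grp) (a : G) (w : seq (bool * G)) : G :=
  foldr (fun p acc => gmul (gmul (apow a p.1) p.2) acc) (gone G) w.

Definition wnth (G : grp) (w : seq (bool * G)) (i : nat) : bool * G :=
  nth (true, gone G) w i.

Definition admissible (G : grp) (D : G -> Prop) (n : natinf)
    (w : seq (bool * G)) : Prop :=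
  (0 < size w)%N /\
  (forall i, (i < size w)%N -> D (wnth w i).2) /\
  (forall i, (i < size w)%N ->
     (wnth w i).1 = ~~ (wnth w ((i.+1) %% size w)).1 ->
     (wnth w i).2 <> gone G) /\
  lt_ni (count (fun p => p.1) w) n /\
  lt_ni (count (fun p => ~~ p.1) w) n.

Definition nRF_rel (G : grp) (D : G -> Prop) (n : natinf) (a : G) : Prop :=
  ~ D a /\ forall w, admissible D n w -> word_val a w <> gone G.

(* The pair (B, D) is n-RF, where D <= B are subgroups of an ambient group G:
   every element of B \ D is n-RF rel D (computed in B, equivalently in G). *)
Definition pair_nRF (G : grp) (B D : G -> Prop) (n : natinf) : Prop :=
  forall b, B b -> ~ D b -> nRF_rel D n b.

(* Main.v *)
Require Import Defs.
From mathcomp Require Import all_boot.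
From Stdlib Require Import Classical.

Lemma lt_ni_mono k m n : le_ni m n -> lt_ni k m -> lt_ni k n.
Proof.
case: m => [a|]; case: n => [b|] //=.
move=> H1 H2; exact: leq_trans H2 H1.
Qed.

Theorem lemma5p21 (A : grp) (n : natinf) (hn : two_le n) :
  (* (1) *)
  (forall C : A -> Prop, is_subgroup C ->
     forall a : A, ~ C a -> nRF_rel C n a ->
     forall m : natinf, two_le m -> le_ni m n -> nRF_rel C m a) /\
  (* (2) *)
  (forall B C : A -> Prop, is_subgroup B -> is_subgroup C ->
     (forall x, C x -> B x) ->
     forall a : A, ~ B a -> nRF_rel B n a -> nRF_rel C n a) /\
  (* (3) *)
  (forall B C : A -> Prop, is_subgroup B -> is_subgroup C ->
     (forall x, C x -> B x) ->
     pair_nRF (fun _ => True) B n -> pair_nRF B C n ->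
     pair_nRF (fun _ => True) C n).
Proof.
have P2 : forall B C : A -> Prop, (forall x, C x -> B x) ->
     forall a : A, ~ B a -> nRF_rel B n a -> nRF_rel C n a.
  move=> B C CB a nBa [_ H]; split; first by move=> /CB.
  move=> w [h1 [h2 [h3 [h4 h5]]]]; apply: H.
  split; first by [].
  split; first by move=> i /h2 /CB.
  by [].
split.
  move=> C _ a nCa [_ H] m _ lemn; split => // w [h1 [h2 [h3 [h4 h5]]]].
  apply: H; do 3 (split; first by []).
  split; exact: lt_ni_mono lemn _.
split.
  move=> B C _ _ CB; exact: P2 CB.
move=> B C _ _ CB HAB HBC b _ nCb.
case: (classic (B b)) => Bb.
  exact: HBC.
exact: P2 CB b Bb (HAB b I Bb).
Qed.
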